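(* Let $L$ be a subfit frame. Then $\overline{\mathrm{LSC}}(L)$ is meet-dense in $\overline{\mathrm{C}}(\mathrm{coS}(L))$ and $\overline{\mathrm{USC}}(L)$ is join-dense in $\overline{\mathrm{C}}(\mathrm{coS}(L))$.
   Context: A frame $L$ is subfit if for all $a,b\in L$ with $a\not\le b$ there is $c$ with $a\vee c=1\ne b\vee c$. A sublocale of $L$ is a subset closed under arbitrary meets and such that $x\to s\in S$ for $x\in L$, $s\in S$; $\mathrm{coS}(L)$ is the frame of all sublocales ordered by reverse inclusion. For $a\in L$, $\mathfrak{c}(a)=\{x\mid x\ge a\}$ is the closed sublocale. $\mathbb{Q}$ is the rationals. The frame of extended reals $\mathfrak{L}(\overline{\mathbb{R}})$ is presented by generators $(r,\textsf{---})$, $(\textsf{---},s)$ ($r,s\in\mathbb{Q}$) subject to (r1) $(r,\textsf{---})\wedge(\textsf{---},s)=0$ whenever $r\ge s$; (r2) $(r,\textsf{---})\vee(\textsf{---},s)=1$ whenever $r<s$; (r3) $(r,\textsf{---})=\bigvee_{s>r}(s,\textsf{---})$; (r4) $(\textsf{---},s)=\bigvee_{r<s}(\textsf{---},r)$. For a frame $M$, $\overline{\mathrm{C}}(M)$ is the set of frame homomorphisms $\mathfrak{L}(\overline{\mathbb{R}})\to M$ ordered by $f\le g$ iff $f(r,\textsf{---})\le g(r,\textsf{---})$ for all $r$. $\overline{\mathrm{LSC}}(L)$ (extended lower semicontinuous functions) is the set of $g\in\overline{\mathrm{C}}(\mathrm{coS}(L))$ with $g(r,\textsf{---})$ a closed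 sublocale for all $r\in\mathbb{Q}$; $\overline{\mathrm{USC}}(L)$ is the set of $g\in\overline{\mathrm{C}}(\mathrm{coS}(L))$ with $g(\textsf{---},s)$ closed for all $s$. A subset $A$ of a poset $P$ is meet-dense (join-dense) if every element of $P$ is a meet (join) in $P$ of elements of $A$. *)

(* Defs.v *)
From mathcomp Require Import all_boot all_order all_algebra.
Set Implicit Arguments. Unset Strict Implicit. Unset Printing Implicit Defensive.
Import Order.TTheory GRing.Theory Num.Theory.

Record frame := Frame {
  fcar :> Type;
  fle : fcar -> fcar -> Prop;
  fsup : (fcar -> Prop) -> fcar;
  fmeet : fcar -> fcar -> fcar;
  fle_refl : forall x, fle x x;
  fle_trans : forall x y z, fle x y -> fle y z -> fle x z;
  fle_antisym : forall x y, fle x y -> fle y x -> x = y;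
  fsup_ub : forall (S : fcar -> Prop) x, S x -> fle x (fsup S);
  fsup_least : forall (S : fcar -> Prop) y,
      (forall x, S x -> fle x y) -> fle (fsup S) y;
  fmeet_glb : forall a b c, fle c (fmeet a b) <-> (fle c a /\ fle c b);
  fdistr : forall a (S : fcar -> Prop),
      fmeet a (fsup S) = fsup (fun y => exists x, S x /\ y = fmeet a x)
}.

Section FrameOps.
Variable L : frame.
Definition ftop : L := fsup (fun _ : L => True).
Definition fbot : L := fsup (fun _ : L => False).
Definition fjoin (a b : L) : L := fsup (fun x => x = a \/ x = b).
Definition finf (A : L -> Prop) : L :=
  fsup (fun x => forall a, A a -> fle x a).
Definition fimp (x s : L) : L := fsup (fun y => fle (fmeet y x) s).
End FrameOps.

Definition subfit (L : frame) : Prop :=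
  forall a b : L, ~ fle a b ->
    exists c : L, fjoin a c = ftop L /\ fjoin b c <> ftop L.

Definition sublocale (L : frame) (S : L -> Prop) : Prop :=
  (forall A : L -> Prop, (forall x, A x -> S x) -> S (finf A)) /\
  (forall (x s : L), S s -> S (fimp x s)).

Definition closed_sub (L : frame) (a : L) : L -> Prop := fun x => fle a x.

Definition is_closed_sub (L : frame) (S : L -> Prop) : Prop :=
  exists a : L, forall x, S x <-> closed_sub a x.

(* The lattice operations of the frame coS(L) of sublocales, ordered  *)
(* by REVERSE inclusion.  Elements are represented by predicates on L *)
(* (required to be sublocales where relevant).                        *)
Section CoS.
Variable L : frame.
Definition coS_le (S T : L -> Prop) : Prop := forall x, T x -> S x.
Definition coS_eq (S T : L -> Prop) : Prop := coS_le S T /\ coS_le T S.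
Definition coS_sup (F : (L -> Prop) -> Prop) : L -> Prop :=
  fun x => forall S, F S -> S x.
Definition coS_join (S T : L -> Prop) : L -> Prop := fun x => S x /\ T x.
(* meet in coS(L) = sublocale generated by the union *)
Definition coS_meet (S T : L -> Prop) : L -> Prop :=
  fun x => exists A : L -> Prop, (forall y, A y -> S y \/ T y) /\ x = finf A.
Definition coS_top : L -> Prop := fun x => x = ftop L.
Definition coS_bot : L -> Prop := fun _ => True.
End CoS.

(* C(coS(L)) with extended reals.  By the universal property of the   *)
(* presentation of L(R-bar), a frame homomorphism L(R-bar) -> coS(L)  *)
(* is the same as an assignment of elements of coS(L) to the          *)
(* generators (r,--) (field [up]) and (--,s) (field [dn]) satisfying  *)
(* the relations (r1)-(r4) in coS(L).                                 *)
Record xhom (L : frame) := XHom {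
  up : rat -> (L -> Prop);
  dn : rat -> (L -> Prop)
}.

Local Open Scope ring_scope.

Definition in_Cbar_coS (L : frame) (f : xhom L) : Prop :=
  (forall r, sublocale (up f r)) /\ (forall s, sublocale (dn f s)) /\
  (forall r s : rat, s <= r ->
      coS_eq (coS_meet (up f r) (dn f s)) (@coS_bot L)) /\
  (forall r s : rat, r < s ->
      coS_eq (coS_join (up f r) (dn f s)) (@coS_top L)) /\
  (forall r : rat,
      coS_eq (up f r)
        (coS_sup (fun S => exists s : rat, r < s /\ S = up f s))) /\
  (forall s : rat,
      coS_eq (dn f s)
        (coS_sup (fun S => exists r : rat, r < s /\ S = dn f r))).

Definition xle (L : frame) (f g : xhom L) : Prop :=
  forall r : rat, coS_le (up f r) (up g r).

Definition in_LSC (L : frame) (g : xhom L) : Prop :=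
  in_Cbar_coS g /\ forall r : rat, is_closed_sub (up g r).

Definition in_USC (L : frame) (g : xhom L) : Prop :=
  in_Cbar_coS g /\ forall s : rat, is_closed_sub (dn g s).

Definition is_meet_in_Cbar (L : frame) (A : xhom L -> Prop) (f : xhom L) :=
  in_Cbar_coS f /\ (forall g, A g -> xle f g) /\
  (forall h, in_Cbar_coS h -> (forall g, A g -> xle h g) -> xle h f).

Definition is_join_in_Cbar (L : frame) (A : xhom L -> Prop) (f : xhom L) :=
  in_Cbar_coS f /\ (forall g, A g -> xle g f) /\
  (forall h, in_Cbar_coS h -> (forall g, A g -> xle g h) -> xle f h).

Definition meet_dense_in_Cbar (L : frame) (P : xhom L -> Prop) : Prop :=
  forall f, in_Cbar_coS f ->
    exists A : xhom L -> Prop, (forall g, A g -> P g) /\ is_meet_in_Cbar A f.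

Definition join_dense_in_Cbar (L : frame) (P : xhom L -> Prop) : Prop :=
  forall f, in_Cbar_coS f ->
    exists A : xhom L -> Prop, (forall g, A g -> P g) /\ is_join_in_Cbar A f.

(* Main.v *)
Require Import Defs.
From mathcomp Require Import all_boot all_order all_algebra.
From Stdlib Require Import Classical.
From mathcomp Require Import lra.
Import Order.TTheory GRing.Theory Num.Theory.
Set Implicit Arguments. Unset Strict Implicit.

Lemma le_top (L : frame) (x : L) : fle x (ftop L).
Proof. by apply: fsup_ub. Qed.

Lemma top_le (L : frame) (x : L) : fle (ftop L) x -> x = ftop L.
Proof. move=> h; apply: fle_antisym => //; exact: le_top. Qed.

Lemma finf_lb (L : frame) (A : L -> Prop) a : A a -> fle (finf A) a.
Proof. move=> Ha; apply: fsup_least => x Hx; exact: Hx. Qed.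

Lemma finf_glb (L : frame) (A : L -> Prop) v :
  (forall a, A a -> fle v a) -> fle v (finf A).
Proof. move=> H; exact: fsup_ub. Qed.

Lemma meet_l (L : frame) (a b : L) : fle (fmeet a b) a.
Proof. by have [] := proj1 (fmeet_glb a b (fmeet a b)) (fle_refl _). Qed.

Lemma meet_r (L : frame) (a b : L) : fle (fmeet a b) b.
Proof. by have [] := proj1 (fmeet_glb a b (fmeet a b)) (fle_refl _). Qed.

Lemma meet_glb (L : frame) (a b c : L) : fle c a -> fle c b -> fle c (fmeet a b).
Proof. move=> h1 h2; exact: (proj2 (fmeet_glb a b c)). Qed.

Lemma join_l (L : frame) (a b : L) : fle a (fjoin a b).
Proof. apply: fsup_ub; by left. Qed.

Lemma join_r (L : frame) (a b : L) : fle b (fjoin a b).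
Proof. apply: fsup_ub; by right. Qed.

Lemma join_lub (L : frame) (a b c : L) : fle a c -> fle b c -> fle (fjoin a b) c.
Proof. move=> h1 h2; apply: fsup_least => x [->|->] //. Qed.

Lemma imp_adj (L : frame) (w u s : L) : fle w (fimp u s) <-> fle (fmeet w u) s.
Proof.
split.
- move=> h.
  apply: (@fle_trans _ _ (fmeet u (fimp u s))).
    apply: meet_glb; [exact: meet_r| exact: (fle_trans (meet_l _ _) h)].
  rewrite /fimp fdistr. apply: fsup_least => y [v [Hv ->]].
  apply: fle_trans Hv. apply: meet_glb; [exact: meet_r|exact: meet_l].
- move=> h; exact: fsup_ub.
Qed.

Lemma meet_top (L : frame) (a : L) : fle a (fmeet (ftop L) a).
Proof. apply: meet_glb; [exact: le_top| exact: fle_refl]. Qed.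

Lemma sub_top_in (L : frame) (S : L -> Prop) : sublocale S -> S (ftop L).
Proof.
move=> [H1 _].
have -> : ftop L = finf (fun _ : L => False).
  apply: fle_antisym; [apply: finf_glb => //| exact: le_top].
by apply: H1.
Qed.

Lemma imp_meet (L : frame) (z v : L) : fimp z (fmeet v z) = fimp z v.
Proof.
apply: fle_antisym; apply/imp_adj.
- apply: fle_trans (meet_l v z). apply/imp_adj; exact: fle_refl.
- apply: meet_glb; last exact: meet_r. apply/imp_adj; exact: fle_refl.
Qed.

Lemma trick (L : frame) (F U : L -> Prop) (x d u : L) :
  sublocale F -> sublocale U -> (forall y, F y -> U y -> y = ftop L) ->
  F x -> U u -> x = fmeet d u -> x = d.
Proof.
move=> sF sU disj Fx Uu xe.
have h : fimp d x = ftop L.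
  apply: disj; first exact: (proj2 sF).
  have -> : fimp d x = fimp d u.
    apply: fle_antisym; apply/imp_adj.
    - apply: fle_trans (meet_r d u); rewrite -xe; apply/imp_adj; exact: fle_refl.
    - rewrite xe; apply: meet_glb; [exact: meet_r|]. apply/imp_adj; exact: fle_refl.
  exact: (proj2 sU).
apply: fle_antisym.
- rewrite xe; exact: meet_l.
- apply: (fle_trans (meet_top d)). apply/imp_adj. rewrite h. exact: fle_refl.
Qed.

Lemma decomp (L : frame) (S T : L -> Prop) (x : L) :
  sublocale S -> sublocale T -> coS_meet S T x ->
  exists s t, S s /\ T t /\ x = fmeet s t.
Proof.
move=> [sS _] [sT _] [A [HA ->]].
exists (finf (fun a => A a /\ S a)), (finf (fun a => A a /\ T a)).
split; first by apply: sS => y [].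
split; first by apply: sT => y [].
apply: fle_antisym.
- apply: meet_glb; apply: finf_glb => a [Aa _]; exact: (finf_lb Aa).
- apply: finf_glb => a Aa. case: (HA a Aa) => h.
  + exact: (fle_trans (meet_l _ _) (finf_lb (conj Aa h))).
  + exact: (fle_trans (meet_r _ _) (finf_lb (conj Aa h))).
Qed.

Lemma meet_comm (L : frame) (a b : L) : fmeet a b = fmeet b a.
Proof. apply: fle_antisym; apply: meet_glb; (exact: meet_l || exact: meet_r). Qed.

Definition topsub (L : frame) : L -> Prop := fun x => x = ftop L.
Arguments topsub L x : clear implicits.
Definition osub (L : frame) (a : L) : L -> Prop :=
  fun x => forall w, fle (fmeet w a) x -> fle w x.

Lemma sub_top (L : frame) : sublocale (topsub L).
Proof.
split.
- move=> A HA; apply: top_le; apply: finf_glb => a Aa; rewrite (HA a Aa); exact: fle_refl.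
- move=> x s ->; apply: top_le; apply/imp_adj; exact: le_top.
Qed.

Lemma sub_all (L : frame) : sublocale (fun _ : L => True).
Proof. by split. Qed.

Lemma sub_c (L : frame) (a : L) : sublocale (closed_sub a).
Proof.
split.
- move=> A HA; apply: finf_glb => b Ab; exact: HA.
- move=> x s hs; apply/imp_adj; exact: (fle_trans (meet_l _ _) hs).
Qed.

Lemma sub_o (L : frame) (a : L) : sublocale (osub a).
Proof.
split.
- move=> A HA w hw; apply: finf_glb => b Ab; apply: (HA b Ab).
  exact: (fle_trans hw (finf_lb Ab)).
- move=> u s hs w hw; apply/imp_adj; apply: hs.
  have h1 := proj1 (imp_adj _ _ _) hw.
  apply: fle_trans h1. repeat apply: meet_glb.
  + exact: (fle_trans (meet_l _ _) (meet_l _ _)).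
  + exact: meet_r.
  + exact: (fle_trans (meet_l _ _) (meet_r _ _)).
Qed.

Lemma co_disj (L : frame) (a x : L) : closed_sub a x -> osub a x -> x = ftop L.
Proof.
move=> hc ho; apply: top_le; apply: ho; exact: (fle_trans (meet_r _ _) hc).
Qed.

Lemma o_imp (L : frame) (a x : L) : osub a (fimp a x).
Proof.
move=> w hw; apply/imp_adj; have h1 := proj1 (imp_adj _ _ _) hw.
apply: fle_trans h1; apply: meet_glb; [exact: fle_refl| exact: meet_r].
Qed.

Lemma co_fin (L : frame) (a x : L) :
  x = finf (fun y => y = fjoin a x \/ y = fimp a x).
Proof.
apply: fle_antisym.
- apply: finf_glb => y [->|->]; first exact: join_r.
  apply/imp_adj; exact: meet_l.
- set m := finf _.
  have hm1 : fle m (fjoin a x) by apply: finf_lb; left.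
  have hm2 : fle m (fimp a x) by apply: finf_lb; right.
  apply: (@fle_trans _ _ (fmeet m (fjoin a x))); first by apply: meet_glb => //; exact: fle_refl.
  rewrite /fjoin fdistr; apply: fsup_least => y [v [[->|->] ->]].
  + exact: (proj1 (imp_adj _ _ _) hm2).
  + exact: meet_r.
Qed.

Lemma co_gen1 (L : frame) (a x : L) : coS_meet (closed_sub a) (osub a) x.
Proof.
exists (fun y => y = fjoin a x \/ y = fimp a x); split; last exact: co_fin.
move=> y [->|->]; [left; exact: join_l| right; exact: o_imp].
Qed.

Lemma co_gen2 (L : frame) (a x : L) : coS_meet (osub a) (closed_sub a) x.
Proof.
exists (fun y => y = fjoin a x \/ y = fimp a x); split; last exact: co_fin.
move=> y [->|->]; [right; exact: join_l| left; exact: o_imp].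
Qed.

Lemma finf_single (L : frame) (x : L) : x = finf (fun y => y = x).
Proof.
apply: fle_antisym; first by apply: finf_glb => y ->; exact: fle_refl.
exact: finf_lb.
Qed.

Lemma single_l (L : frame) (S T : L -> Prop) x : S x -> coS_meet S T x.
Proof. move=> h; exists (fun y => y = x); split; [move=> y ->; by left| exact: finf_single]. Qed.

Lemma single_r (L : frame) (S T : L -> Prop) x : T x -> coS_meet S T x.
Proof. move=> h; exists (fun y => y = x); split; [move=> y ->; by right| exact: finf_single]. Qed.

Lemma core (L : frame) (HL : subfit L) (T E S : L -> Prop) :
  sublocale T -> sublocale E -> sublocale S ->
  (forall y, T y -> E y -> y = ftop L) -> (forall w, coS_meet S E w) ->
  forall x, T x -> exists P : L -> Prop,
    (forall y, P y -> forall w, fle y w -> S w) /\ x = finf P.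
Proof.
move=> sT sE sS disj gen x Tx.
pose P := fun y => fle x y /\ (forall e, E e -> fle y e -> e = ftop L).
exists P; split.
- move=> y [_ Py] w yw.
  have [s [t [Ss [Et wE]]]] := decomp sS sE (gen w).
  rewrite wE in yw *.
  have t1 : t = ftop L by apply: Py => //; exact: (fle_trans yw (meet_r _ _)).
  have -> : fmeet s t = s.
    apply: fle_antisym; first exact: meet_l.
    apply: meet_glb; [exact: fle_refl| rewrite t1; exact: le_top].
  exact: Ss.
- pose nu := finf (fun e => E e /\ fle x e).
  pose z := finf P.
  have step1 : fle (fmeet nu z) x.
    case: (classic (fle (fmeet nu z) x)) => // h; exfalso.
    have [c [h1 h2]] := HL _ _ h.
    have Py : P (fjoin x c).
      split; first exact: join_l.
      move=> e Ee ye; apply: top_le; rewrite -h1; apply: join_lub.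
      + apply: fle_trans (meet_l _ _) _; apply: finf_lb; split => //.
        exact: (fle_trans (join_l _ _) ye).
      + exact: (fle_trans (join_r _ _) ye).
    have zy : fle z (fjoin x c) by exact: finf_lb.
    apply: h2; apply: top_le; rewrite -h1; apply: join_lub.
    + exact: (fle_trans (meet_r _ _) zy).
    + exact: join_r.
  have Enu : E nu by apply: (proj1 sE) => e [].
  apply: (trick sT sE disj Tx Enu).
  apply: fle_antisym.
  + apply: meet_glb; apply: finf_glb => a [] //.
  + by rewrite meet_comm.
Qed.

Local Open Scope ring_scope.

Section Dummy. End Dummy.

Lemma up_mono (L : frame) (f : xhom L) : in_Cbar_coS f ->
  forall (r s : rat) x, r < s -> up f r x -> up f s x.
Proof.
move=> [_ [_ [_ [_ [r3 _]]]]] r s x hrs hx.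
exact: ((r3 r).2 x hx (up f s) (ex_intro _ s (conj hrs erefl))).
Qed.

Lemma up_lim (L : frame) (f : xhom L) : in_Cbar_coS f ->
  forall (r : rat) x, (forall s, r < s -> up f s x) -> up f r x.
Proof.
move=> [_ [_ [_ [_ [r3 _]]]]] r x h.
apply: (r3 r).1 => S [s [hs ->]]; exact: h.
Qed.

Lemma dn_mono (L : frame) (f : xhom L) : in_Cbar_coS f ->
  forall (r s : rat) x, r < s -> dn f s x -> dn f r x.
Proof.
move=> [_ [_ [_ [_ [_ r4]]]]] r s x hrs hx.
exact: ((r4 s).2 x hx (dn f r) (ex_intro _ r (conj hrs erefl))).
Qed.

Lemma dn_lim (L : frame) (f : xhom L) : in_Cbar_coS f ->
  forall (s : rat) x, (forall r, r < s -> dn f r x) -> dn f s x.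
Proof.
move=> [_ [_ [_ [_ [_ r4]]]]] s x h.
apply: (r4 s).1 => S [r [hr ->]]; exact: h.
Qed.

Lemma f_gen (L : frame) (f : xhom L) : in_Cbar_coS f ->
  forall (r q : rat) x, q <= r -> coS_meet (up f r) (dn f q) x.
Proof. move=> [_ [_ [r1 _]]] r q x h; exact: ((r1 r q h).1 x I). Qed.

Lemma f_disj (L : frame) (f : xhom L) : in_Cbar_coS f ->
  forall (r s : rat) x, r < s -> up f r x -> dn f s x -> x = ftop L.
Proof. move=> [_ [_ [_ [r2 _]]]] r s x h h1 h2; exact: ((r2 r s h).2 x (conj h1 h2)). Qed.

Lemma f_up_sub (L : frame) (f : xhom L) : in_Cbar_coS f -> forall r, sublocale (up f r).
Proof. by case. Qed.

Lemma f_dn_sub (L : frame) (f : xhom L) : in_Cbar_coS f -> forall r, sublocale (dn f r).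
Proof. by case=> _ []. Qed.

Lemma ord_a (L : frame) (f g : xhom L) : in_Cbar_coS f -> in_Cbar_coS g ->
  (forall r x, up g r x -> up f r x) -> forall s x, dn f s x -> dn g s x.
Proof.
move=> Hf Hg hle s x hx; apply: (dn_lim Hg) => r hrs.
have [u [d [Uu [Dd xe]]]] := decomp (f_up_sub Hg r) (f_dn_sub Hg r) (f_gen Hg x (lexx r)).
rewrite meet_comm in xe.
have dj : forall y, dn f s y -> up g r y -> y = ftop L.
  move=> y h1 h2; exact: (f_disj Hf hrs (hle _ _ h2) h1).
by rewrite (trick (f_dn_sub Hf s) (f_up_sub Hg r) dj hx Uu xe).
Qed.

Lemma ord_b (L : frame) (f g : xhom L) : in_Cbar_coS f -> in_Cbar_coS g ->
  (forall s x, dn f s x -> dn g s x) -> forall r x, up g r x -> up f r x.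
Proof.
move=> Hf Hg hle r x hx; apply: (up_lim Hf) => s hrs.
have [u [d [Uu [Dd xe]]]] := decomp (f_up_sub Hf s) (f_dn_sub Hf s) (f_gen Hf x (lexx s)).
have dj : forall y, up g r y -> dn f s y -> y = ftop L.
  move=> y h1 h2; exact: (f_disj Hg hrs h1 (hle _ _ h2)).
by rewrite (trick (f_up_sub Hg r) (f_dn_sub Hf s) dj hx Dd xe).
Qed.

Definition Gx (L : frame) (a : L) (t : rat) : xhom L :=
  XHom (fun r => if r < t then topsub L else closed_sub a)
       (fun s => if s <= t then (fun _ => True) else osub a).

Definition Hx (L : frame) (a : L) (t : rat) : xhom L :=
  XHom (fun r => if r < t then osub a else (fun _ => True))
       (fun s => if s <= t then closed_sub a else topsub L).

Lemma Gx_up_sub (L : frame) (a : L) t r : sublocale (up (Gx a t) r).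
Proof. rewrite /=; case: ifP => _; [exact: sub_top| exact: sub_c]. Qed.
Lemma Gx_dn_sub (L : frame) (a : L) t r : sublocale (dn (Gx a t) r).
Proof. rewrite /=; case: ifP => _; [exact: sub_all| exact: sub_o]. Qed.
Lemma Hx_up_sub (L : frame) (a : L) t r : sublocale (up (Hx a t) r).
Proof. rewrite /=; case: ifP => _; [exact: sub_o| exact: sub_all]. Qed.
Lemma Hx_dn_sub (L : frame) (a : L) t r : sublocale (dn (Hx a t) r).
Proof. rewrite /=; case: ifP => _; [exact: sub_c| exact: sub_top]. Qed.

Lemma Gx_Cbar (L : frame) (a : L) t : in_Cbar_coS (Gx a t).
Proof.
split; first exact: Gx_up_sub.
split; first exact: Gx_dn_sub.
split.
  move=> r s hsr; split; last by move=> x _.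
  move=> x _ /=; case: (ltP r t) => hr; case: (leP s t) => hs.
  - exact: single_r.
  - exfalso; lra.
  - exact: single_r.
  - exact: co_gen1.
split.
  move=> r s hrs; split.
    move=> x ->; split; [exact: sub_top_in (Gx_up_sub a t r)| exact: sub_top_in (Gx_dn_sub a t s)].
  move=> x [] /=; case: (ltP r t) => hr; case: (leP s t) => hs //.
  - exfalso; lra.
  - exact: co_disj.
split.
  move=> r; split.
    move=> x hx /=; case: (ltP r t) => hr.
    + have := hx (up (Gx a t) ((r + t) / 2)) (ex_intro _ ((r + t) / 2) (conj (ltac:(lra) : r < (r + t) / 2) erefl)).
      by rewrite /= (ltac:(lra) : (r + t) / 2 < t).
    + have := hx (up (Gx a t) (r + 1)) (ex_intro _ (r + 1) (conj (ltac:(lra) : r < r + 1) erefl)).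
      by rewrite /= ltNge (ltac:(lra) : t <= r + 1).
  move=> x hx S [s [hs ->]]; move: hx => /=; case: (ltP r t) => hr; case: (ltP s t) => hst //.
  + move=> ->; exact: sub_top_in (sub_c a).
  + move=> _; exfalso; lra.
move=> s; split.
  move=> x hx /=; case: (leP s t) => hs //.
  have := hx (dn (Gx a t) ((s + t) / 2)) (ex_intro _ ((s + t) / 2) (conj (ltac:(lra) : (s + t) / 2 < s) erefl)).
  by rewrite /= leNgt (ltac:(lra) : t < (s + t) / 2).
move=> x hx S [r [hr ->]]; move: hx => /=; case: (leP s t) => hs; case: (leP r t) => hrt //.
move=> _; exfalso; lra.
Qed.

Lemma Hx_Cbar (L : frame) (a : L) t : in_Cbar_coS (Hx a t).
Proof.
split; first exact: Hx_up_sub.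
split; first exact: Hx_dn_sub.
split.
  move=> r s hsr; split; last by move=> x _.
  move=> x _ /=; case: (ltP r t) => hr; case: (leP s t) => hs.
  - exact: co_gen2.
  - exfalso; lra.
  - exact: single_l.
  - exact: single_l.
split.
  move=> r s hrs; split.
    move=> x ->; split; [exact: sub_top_in (Hx_up_sub a t r)| exact: sub_top_in (Hx_dn_sub a t s)].
  move=> x [] /=; case: (ltP r t) => hr; case: (leP s t) => hs //.
  - move=> h1 h2; exact: co_disj h2 h1.
  - exfalso; lra.
split.
  move=> r; split.
    move=> x hx /=; case: (ltP r t) => hr //.
    have := hx (up (Hx a t) ((r + t) / 2)) (ex_intro _ ((r + t) / 2) (conj (ltac:(lra) : r < (r + t) / 2) erefl)).
    by rewrite /= (ltac:(lra) : (r + t) / 2 < t).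
  move=> x hx S [s [hs ->]]; move: hx => /=; case: (ltP r t) => hr; case: (ltP s t) => hst //.
  move=> _; exfalso; lra.
move=> s; split.
  move=> x hx /=; case: (leP s t) => hs.
  + have := hx (dn (Hx a t) (s - 1)) (ex_intro _ (s - 1) (conj (ltac:(lra) : s - 1 < s) erefl)).
    by rewrite /= (ltac:(lra) : s - 1 <= t).
  + have := hx (dn (Hx a t) ((s + t) / 2)) (ex_intro _ ((s + t) / 2) (conj (ltac:(lra) : (s + t) / 2 < s) erefl)).
    by rewrite /= leNgt (ltac:(lra) : t < (s + t) / 2).
move=> x hx S [r [hr ->]]; move: hx => /=; case: (leP s t) => hs; case: (leP r t) => hrt //.
- move=> _; exfalso; lra.
- move=> ->; exact: sub_top_in (sub_c a).
Qed.

Lemma Gx_LSC (L : frame) (a : L) t : in_LSC (Gx a t).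
Proof.
split; first exact: Gx_Cbar.
move=> r /=; case: ifP => _.
- exists (ftop L) => x; split; first by move=> ->; exact: fle_refl.
  exact: top_le.
- by exists a.
Qed.

Lemma Hx_USC (L : frame) (a : L) t : in_USC (Hx a t).
Proof.
split; first exact: Hx_Cbar.
move=> r /=; case: ifP => _.
- by exists a.
- exists (ftop L) => x; split; first by move=> ->; exact: fle_refl.
  exact: top_le.
Qed.

Lemma meet_swap (L : frame) (S T : L -> Prop) x : coS_meet S T x -> coS_meet T S x.
Proof. move=> [A [HA ->]]; exists A; split => // y Ay; case: (HA y Ay); tauto. Qed.

Theorem proposition4p4 (L : frame) (HL : subfit L) :
  meet_dense_in_Cbar (@in_LSC L) /\ join_dense_in_Cbar (@in_USC L).
Proof.
split.
- move=> f Hf; exists (fun g => in_LSC g /\ xle f g); split; first by move=> g [].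
  split; first exact: Hf.
  split; first by move=> g [].
  move=> h Hh hlow r x hx; apply: (up_lim Hh) => s hrs.
  have [P [HP ->]] := core HL (f_up_sub Hf r) (f_dn_sub Hf s) (f_up_sub Hf s)
    (fun y h1 h2 => f_disj Hf hrs h1 h2) (fun w => f_gen Hf w (lexx s)) hx.
  apply: (proj1 (f_up_sub Hh s)) => y Py.
  have AG : in_LSC (Gx y s) /\ xle f (Gx y s).
    split; first exact: Gx_LSC.
    move=> r' z /=; case: (ltP r' s) => hr'.
    + move=> ->; exact: sub_top_in (f_up_sub Hf r').
    + move=> hz; have hs := HP y Py z hz.
      move: hr'; rewrite le_eqVlt => /orP [/eqP <- //| hlt].
      exact: up_mono Hf _ _ _ hlt hs.
  apply: (hlow _ AG s y) => /=; rewrite ltxx; exact: fle_refl.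
- move=> f Hf; exists (fun g => in_USC g /\ xle g f); split; first by move=> g [].
  split; first exact: Hf.
  split; first by move=> g [].
  move=> h Hh hup; apply: (ord_b Hf Hh) => s x hx; apply: (dn_lim Hh) => r hrs.
  have [P [HP ->]] := core HL (f_dn_sub Hf s) (f_up_sub Hf r) (f_dn_sub Hf r)
    (fun y h1 h2 => f_disj Hf hrs h2 h1) (fun w => meet_swap (f_gen Hf w (lexx r))) hx.
  apply: (proj1 (f_dn_sub Hh r)) => y Py.
  have AH : in_USC (Hx y r) /\ xle (Hx y r) f.
    split; first exact: Hx_USC.
    apply: (ord_b (Hx_Cbar y r) Hf) => s' z /=; case: (leP s' r) => hs'.
    + move=> hz; have hr := HP y Py z hz.
      move: hs'; rewrite le_eqVlt => /orP [/eqP -> //| hlt].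
      exact: dn_mono Hf _ _ _ hlt hr.
    + move=> ->; exact: sub_top_in (f_dn_sub Hf s').
  apply: (ord_a (Hx_Cbar y r) Hh (hup _ AH)).
  rewrite /= lexx; exact: fle_refl.
Qed.
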